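(* Let $\mathcal A$ be a maximal commutative subalgebra of $\mathcal M_d(\mathbb C)$. Suppose $\mathcal B$ is a commutative algebra of block Toeplitz matrices with entries in $\mathcal A$ (i.e. $\mathcal B\subset\mathcal T_{n,d}[\mathcal A]$), and $D$ is a block Toeplitz cyclic diagonal with entries in $\mathcal A$ such that $D\intercal\mathcal B$. Then the algebra $\mathcal B_1$ generated by $\mathcal B$ and $D$ consists of block Toeplitz matrices.
   Context: A block Toeplitz matrix is an $n\times n$ block matrix $A=(A_{i-j})_{i,j=0}^{n-1}$ with $A_m\in\mathcal M_d(\mathbb C)$; $\mathcal T_{n,d}[\mathcal A]$ is the set of block Toeplitz matrices all of whose entries $A_m$ lie in $\mathcal A$. A cyclic diagonal of order $k$ ($0\le k\le n-1$) is an $n\times n$ block matrix $T$ with $T_{i,j}=0$ unless $i-j=k$ or $i-j=k-n$. For block Toeplitz $A,B$, write $A\intercal B$ if $AB$ is block Toeplitz, and $A\intercal\mathcal S$ if $A\intercal B$ for all $B\in\mathcal S$. *)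

(* Defs.v *)
From HB Require Import structures.
From mathcomp Require Import all_boot all_order all_algebra.
Set Implicit Arguments. Unset Strict Implicit. Unset Printing Implicit Defensive.
Import Order.TTheory GRing.Theory Num.Theory.
Local Open Scope ring_scope.

(* A block matrix of size n x n with d x d blocks is represented as an
   n x n matrix whose entries lie in the (non-commutative) ring 'M[C]_d.
   The block product is then mulmx ( *m ). *)
Notation blockmx C n d := 'M['M[C]_d]_n.

Definition bscale (C : numClosedFieldType) (n d : nat) (c : C)
  (X : blockmx C n d) : blockmx C n d := map_mx (fun a => c *: a) X.

Definition is_subalgebra (C : numClosedFieldType) (d : nat)
  (A : 'M[C]_d -> Prop) : Prop :=
  A 1%:M /\
  (forall x y, A x -> A y -> A (x + y)) /\
  (forall (c : C) x, A x -> A (c *: x)) /\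
  (forall x y, A x -> A y -> A (x *m y)).

Definition is_commutative_set (C : numClosedFieldType) (d : nat)
  (A : 'M[C]_d -> Prop) : Prop :=
  forall x y, A x -> A y -> x *m y = y *m x.

Definition maximal_commutative_subalgebra (C : numClosedFieldType) (d : nat)
  (A : 'M[C]_d -> Prop) : Prop :=
  is_subalgebra A /\ is_commutative_set A /\
  (forall A' : 'M[C]_d -> Prop, is_subalgebra A' -> is_commutative_set A' ->
     (forall x, A x -> A' x) -> forall x, A' x -> A x).

Definition is_block_toeplitz (C : numClosedFieldType) (n d : nat)
  (X : blockmx C n d) : Prop :=
  forall i j i' j' : 'I_n,
    (i%:Z - j%:Z = i'%:Z - j'%:Z)%R -> X i j = X i' j'.

Definition in_toeplitz_over (C : numClosedFieldType) (n d : nat)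
  (A : 'M[C]_d -> Prop) (X : blockmx C n d) : Prop :=
  is_block_toeplitz X /\ forall i j, A (X i j).

Definition is_cyclic_diagonal (C : numClosedFieldType) (n d : nat) (k : nat)
  (X : blockmx C n d) : Prop :=
  (k < n)%N /\
  forall i j : 'I_n,
    (i%:Z - j%:Z != k%:Z)%R -> (i%:Z - j%:Z != k%:Z - n%:Z)%R -> X i j = 0.

(* A T B : the product AB is block Toeplitz *)
Definition ttimes (C : numClosedFieldType) (n d : nat)
  (X Y : blockmx C n d) : Prop := is_block_toeplitz (X *m Y).

Definition is_block_algebra (C : numClosedFieldType) (n d : nat)
  (B : blockmx C n d -> Prop) : Prop :=
  (forall x y, B x -> B y -> B (x + y)) /\
  (forall (c : C) x, B x -> B (bscale c x)) /\
  (forall x y, B x -> B y -> B (x *m y)).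

Definition is_commutative_block_set (C : numClosedFieldType) (n d : nat)
  (B : blockmx C n d -> Prop) : Prop :=
  forall x y, B x -> B y -> x *m y = y *m x.

Inductive gen_algebra (C : numClosedFieldType) (n d : nat)
  (B : blockmx C n d -> Prop) (D : blockmx C n d) : blockmx C n d -> Prop :=
| gen_base : forall x, B x -> gen_algebra B D x
| gen_D : gen_algebra B D D
| gen_add : forall x y, gen_algebra B D x -> gen_algebra B D y ->
    gen_algebra B D (x + y)
| gen_scale : forall (c : C) x, gen_algebra B D x ->
    gen_algebra B D (bscale c x)
| gen_mul : forall x y, gen_algebra B D x -> gen_algebra B D y ->
    gen_algebra B D (x *m y).

(* Main.v *)
Require Import Defs.
From HB Require Import structures.
From mathcomp Require Import all_boot all_order all_algebra.
From mathcomp Require Import zify.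
Import GRing.Theory Num.Theory.
Local Open Scope ring_scope.

Set Implicit Arguments.
Unset Strict Implicit.

Section Toep.
Variable (C : numClosedFieldType) (d m : nat).
Local Notation n := m.+1.
Local Notation T := 'M[C]_d.
Implicit Types X Y M Q D : 'M[T]_n.

Definition e X (i j : nat) : T := X (inord i) (inord j).
Definition Tp X := forall i j i' j', (i < n)%N -> (j < n)%N -> (i' < n)%N -> (j' < n)%N ->
  (i + j' = i' + j)%N -> e X i j = e X i' j'.

Lemma eE X (i j : 'I_n) : X i j = e X i j.
Proof. by rewrite /e !inord_val. Qed.

Lemma toepE X : is_block_toeplitz X <-> Tp X.
Proof.
split.
  move=> H i j i' j' hi hj hi' hj' E; apply: H; rewrite !inordK //; lia.
move=> H i j i' j' E; rewrite !eE; apply: H => //; lia.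
Qed.

Lemma e_mul X Y (i j : nat) : (i < n)%N -> (j < n)%N ->
  e (X *m Y) i j = \sum_(l < n) e X i l * e Y l j.
Proof. move=> hi hj; rewrite /e mxE; apply: eq_bigr => l _; by rewrite inord_val. Qed.

Lemma Tp_shift M : (forall i j, (i.+1 < n)%N -> (j.+1 < n)%N -> e M i.+1 j.+1 = e M i j) -> Tp M.
Proof.
move=> H.
have Ht : forall t i j, (i + t < n)%N -> (j + t < n)%N -> e M (i + t) (j + t) = e M i j.
  elim=> [|t IH] i j hi hj; first by rewrite !addn0.
  rewrite !addnS H; [apply: IH|..]; lia.
move=> i j i' j' hi hj hi' hj' E.
case: (leqP j i) => hij.
  have h := Ht j (i - j)%N 0 ltac:(lia) ltac:(lia).
  have h' := Ht j' (i' - j')%N 0 ltac:(lia) ltac:(lia).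
  rewrite add0n subnK // in h; rewrite add0n subnK in h'; last by lia.
  have e1 : (i' - j' = i - j)%N by lia.
  by rewrite h h' e1.
have h := Ht i 0 (j - i)%N ltac:(lia) ltac:(lia).
have h' := Ht i' 0 (j' - i')%N ltac:(lia) ltac:(lia).
rewrite add0n subnK in h; last by lia.
rewrite add0n subnK in h'; last by lia.
have e1 : (j' - i' = j - i)%N by lia.
by rewrite h h' e1.
Qed.

Lemma cyc_nat k D : is_cyclic_diagonal k D -> forall i j : nat, (i < n)%N -> (j < n)%N ->
  i != (j + k)%N -> (i + n)%N != (j + k)%N -> e D i j = 0.
Proof.
move=> [_ H] i j hi hj h1 h2; rewrite /e H //; rewrite !inordK //; apply/eqP; lia.
Qed.

Lemma DQ_entry k D Q (i j l0 : nat) : is_cyclic_diagonal k D ->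
  (i < n)%N -> (j < n)%N -> (l0 < n)%N -> (i = l0 + k \/ i + n = l0 + k)%N ->
  e (D *m Q) i j = e D i l0 * e Q l0 j.
Proof.
move=> cD hi hj hl E; rewrite e_mul //.
rewrite (bigD1 (inord l0)) //= big1 ?addr0; first by rewrite inordK.
move=> l hl0.
have hl' : (l : nat) != l0.
  apply: contra hl0 => /eqP h; apply/eqP/val_inj; by rewrite /= inordK // -h.
have hln := ltn_ord l; rewrite (cyc_nat cD) ?mul0r //; lia.
Qed.

Lemma step k D Q : is_cyclic_diagonal k D -> Tp D -> Tp Q -> Tp (D *m Q) ->
  (forall i j i' j', e D i j * e D i' j' = e D i' j' * e D i j) ->
  Tp (D *m (D *m Q)).
Proof.
move=> cD TD TQ TM cm.
have hk : (k < n)%N by case: cD.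
apply: Tp_shift => i j hi hj.
case: (leqP k i) => hki.
  rewrite (@DQ_entry k D (D *m Q) i.+1 j.+1 (i.+1 - k)%N) //; try lia.
  rewrite (@DQ_entry k D (D *m Q) i j (i - k)%N) //; try lia.
  congr (_ * _); [apply: TD | apply: TM]; lia.
case: (ltnP i.+1 k) => hik.
  rewrite (@DQ_entry k D (D *m Q) i.+1 j.+1 (i.+1 + n - k)%N) //; try lia.
  rewrite (@DQ_entry k D (D *m Q) i j (i + n - k)%N) //; try lia.
  congr (_ * _); [apply: TD | apply: TM]; lia.
have ek : k = i.+1 by lia.
subst k.
have L : e (D *m (D *m Q)) i.+1 j.+1 = e D i.+1 0 * e (D *m Q) 0 j.+1.
  apply: (DQ_entry _ cD); lia.
have R : e (D *m (D *m Q)) i j = e D i m * e (D *m Q) m j.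
  apply: (DQ_entry _ cD); lia.
have R2 : e (D *m Q) m j = e D m (m - i.+1)%N * e Q (m - i.+1)%N j.
  apply: (DQ_entry _ cD); lia.
have R3 : e D m (m - i.+1)%N = e D i.+1 0 by apply: TD; lia.
rewrite L R R2 R3.
set a := e D i.+1 0; set b := e D i m.
case: (ltnP (j.+1 + i.+1)%N n) => hjk.
  have L2 : e (D *m Q) 0 j.+1 = e (D *m Q) i.+1 (j + i.+1)%N.+1 by apply: TM; lia.
  have L3 : e (D *m Q) i.+1 (j + i.+1)%N.+1 = a * e Q 0 (j + i.+1)%N.+1.
    apply: (DQ_entry _ cD); lia.
  have cr : e (D *m Q) i.+1 (j + i.+1)%N.+1 = e (D *m Q) i (j + i.+1)%N by apply: TM; lia.
  have cr2 : e (D *m Q) i (j + i.+1)%N = b * e Q m (j + i.+1)%N.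
    apply: (DQ_entry _ cD); lia.
  have Q1 : e Q m (j + i.+1)%N = e Q (m - i.+1)%N j by apply: TQ; lia.
  rewrite L2 L3; rewrite L3 cr2 Q1 in cr.
  rewrite cr !mulrA; congr (_ * _); exact: cm.
have L2 : e (D *m Q) 0 j.+1 = e (D *m Q) (m - 1 - j)%N m by apply: TM; lia.
have L3 : e (D *m Q) (m - 1 - j)%N m = e D (m - 1 - j)%N (2 * m - j - i.+1)%N * e Q (2 * m - j - i.+1)%N m.
  apply: (DQ_entry _ cD); lia.
have L4 : e D (m - 1 - j)%N (2 * m - j - i.+1)%N = b by apply: TD; lia.
have L5 : e Q (2 * m - j - i.+1)%N m = e Q (m - i.+1)%N j by apply: TQ; lia.
rewrite L2 L3 L4 L5 !mulrA; congr (_ * _); exact: cm.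
Qed.

End Toep.

Section Main.
Variable (C : numClosedFieldType) (d : nat).
Local Notation T := 'M[C]_d.

Lemma toep_comm n (X Y : 'M[T]_n) : is_block_toeplitz X -> is_block_toeplitz Y ->
  (forall i j i' j', X i j * Y i' j' = Y i' j' * X i j) ->
  is_block_toeplitz (X *m Y) -> X *m Y = Y *m X.
Proof.
move=> TX TY cm TXY; apply/matrixP => i j.
rewrite (TXY i j (rev_ord j) (rev_ord i)); last by rewrite /=; have := ltn_ord i; have := ltn_ord j; lia.
rewrite !mxE (reindex_inj rev_ord_inj) /=; apply: eq_bigr => l _.
rewrite (TX (rev_ord j) (rev_ord l) l j); last by rewrite /=; have := ltn_ord l; have := ltn_ord j; lia.
rewrite (TY (rev_ord l) (rev_ord i) i l); last by rewrite /=; have := ltn_ord l; have := ltn_ord i; lia.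
exact: cm.
Qed.

Lemma bscale_mull n (c : C) (X Y : 'M[T]_n) : bscale c X *m Y = bscale c (X *m Y).
Proof.
apply/matrixP => i j; rewrite /bscale !mxE scaler_sumr; apply: eq_bigr => l _.
by rewrite mxE; symmetry; exact: scalemxAl.
Qed.

Lemma bscale_mulr n (c : C) (X Y : 'M[T]_n) : X *m bscale c Y = bscale c (X *m Y).
Proof.
apply/matrixP => i j; rewrite /bscale !mxE scaler_sumr; apply: eq_bigr => l _.
by rewrite mxE; symmetry; exact: scalemxAr.
Qed.

Lemma toep_add n (X Y : 'M[T]_n) : is_block_toeplitz X -> is_block_toeplitz Y ->
  is_block_toeplitz (X + Y).
Proof. by move=> TX TY i j i' j' E; rewrite !mxE (TX _ _ _ _ E) (TY _ _ _ _ E). Qed.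

Lemma toep_scale n (c : C) (X : 'M[T]_n) : is_block_toeplitz X ->
  is_block_toeplitz (bscale c X).
Proof. by move=> TX i j i' j' E; rewrite /bscale !mxE (TX _ _ _ _ E). Qed.

End Main.

Inductive span (C : numClosedFieldType) (n d : nat) (F : blockmx C n d -> Prop) :
  blockmx C n d -> Prop :=
| span_F : forall x, F x -> span F x
| span_add : forall x y, span F x -> span F y -> span F (x + y)
| span_scale : forall (c : C) x, span F x -> span F (bscale c x).

Lemma span_mul (C : numClosedFieldType) (n d : nat) (F : blockmx C n d -> Prop) :
  (forall x y, F x -> F y -> F (x *m y)) ->
  forall x y, span F x -> span F y -> span F (x *m y).
Proof.
move=> HF x y sx; elim: sx y => [x0 Fx|x1 x2 _ IH1 _ IH2|c x0 _ IH] y sy.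
- elim: sy => [y0 Fy|y1 y2 _ IH1 _ IH2|c y0 _ IH].
  + by apply: span_F; apply: HF.
  + by rewrite mulmxDr; apply: span_add.
  + by rewrite bscale_mulr; apply: span_scale.
- by rewrite mulmxDl; apply: span_add; [apply: IH1|apply: IH2].
- by rewrite bscale_mull; apply: span_scale; apply: IH.
Qed.

Lemma span_ind_prop (C : numClosedFieldType) (n d : nat) (F P : blockmx C n d -> Prop) :
  (forall x, F x -> P x) -> (forall x y, P x -> P y -> P (x + y)) ->
  (forall c x, P x -> P (bscale c x)) -> forall x, span F x -> P x.
Proof. move=> h1 h2 h3 x; elim => *; auto. Qed.

Theorem corollary4p4 (C : numClosedFieldType) (n d : nat)
  (A : 'M[C]_d -> Prop) (B : 'M['M[C]_d]_n -> Prop) (D : 'M['M[C]_d]_n)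
  (k : nat) :
  maximal_commutative_subalgebra A ->
  is_block_algebra B -> is_commutative_block_set B ->
  (forall X, B X -> in_toeplitz_over A X) ->
  in_toeplitz_over A D -> is_cyclic_diagonal k D ->
  (forall X, B X -> ttimes D X) ->
  forall X, gen_algebra B D X -> is_block_toeplitz X.
Proof.
move=> [[A1 [Aadd [Asc Amul]]] [Acomm _]] [Badd [Bsc Bmul]] Bcomm BA [TD AD] cD DB X gX.
destruct n as [|m]; first by move=> [].
have comm : forall x y : 'M[C]_d, A x -> A y -> x * y = y * x := Acomm.
have A0 : A 0 by have := Asc 0 _ A1; rewrite scale0r.
have Asum : forall (I : finType) (F : I -> 'M[C]_d), (forall i, A (F i)) -> A (\sum_i F i).
  by move=> I F HF; apply: big_ind => //; apply: Aadd.
have Amx : forall P Q : 'M['M[C]_d]_m.+1, (forall i j, A (P i j)) -> (forall i j, A (Q i j)) ->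
    forall i j, A ((P *m Q) i j).
  by move=> P Q hP hQ i j; rewrite mxE; apply: Asum => l; apply: Amul.
set Inv := fun Q : 'M['M[C]_d]_m.+1 =>
  is_block_toeplitz Q /\ (forall i j, A (Q i j)) /\ is_block_toeplitz (D *m Q).
have cmD : forall i j i' j', e D i j * e D i' j' = e D i' j' * e D i j.
  by move=> *; apply: comm; apply: AD.
have Istep : forall Q, Inv Q -> Inv (D *m Q).
  move=> Q [TQ [AQ TDQ]]; split; first by [].
  split; first by apply: Amx.
  apply/toepE; apply: (step cD) => //; apply/toepE => //.
have Ipow : forall j Q, Inv Q -> Inv (iter j (mulmx D) Q).
  by elim=> [|j IH] Q hQ //=; apply: Istep; apply: IH.
set Bq := fun Q : 'M['M[C]_d]_m.+1 => B Q \/ Q = 1%:M.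
have T1 : is_block_toeplitz (1%:M : 'M['M[C]_d]_m.+1).
  move=> i j i' j' E; rewrite !mxE.
  have -> : (i == j) = (i' == j'); last by [].
  apply/idP/idP => /eqP h; apply/eqP/val_inj; move: h E => /(congr1 val) /= h E; lia.
have IBq : forall Q, Bq Q -> Inv Q.
  move=> Q [hB|->].
    by have [TQ AQ] := BA Q hB; split; [|split] => //; apply: DB.
  split; first exact: T1.
  split; last by rewrite mulmx1.
  move=> i j; rewrite mxE; case: (i == j); [rewrite mulr1n; exact: A1|by rewrite mulr0n].
have cBq : forall Q, Bq Q -> Q *m D = D *m Q.
  move=> Q [hB|->]; last by rewrite mul1mx mulmx1.
  have [TQ AQ] := BA Q hB.
  symmetry; apply: toep_comm => //; last by apply: DB.
  by move=> *; apply: comm.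
have Bqmul : forall Q R : 'M['M[C]_d]_m.+1, Bq Q -> Bq R -> Bq (Q *m R).
  move=> Q R [hQ|->] [hR|->].
  - by left; apply: Bmul.
  - by left; rewrite mulmx1.
  - by left; rewrite mul1mx.
  - by right; rewrite mulmx1.
have powl : forall i (Q R : 'M['M[C]_d]_m.+1), iter i (mulmx D) Q *m R = iter i (mulmx D) (Q *m R).
  by elim=> [|i IH] Q R //=; rewrite -mulmxA IH.
have powc : forall j (Q R : 'M['M[C]_d]_m.+1), Q *m D = D *m Q ->
    Q *m iter j (mulmx D) R = iter j (mulmx D) (Q *m R).
  by move=> j Q R hQ; elim: j => [|j IH] //=; rewrite mulmxA hQ -mulmxA IH.
set F := fun Y : 'M['M[C]_d]_m.+1 => exists j Q, Bq Q /\ Y = iter j (mulmx D) Q.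
have Fmul : forall x y, F x -> F y -> F (x *m y).
  move=> x y [i [Q [hQ ->]]] [j [R [hR ->]]].
  exists (i + j)%N, (Q *m R); split; first by apply: Bqmul.
  by rewrite powl powc ?cBq // iterD.
have sF : span F X.
  elim: gX => [x hx||||].
  - by apply: span_F; exists 0%N, x; split => //; left.
  - by apply: span_F; exists 1%N, 1%:M; split; [right|rewrite /= mulmx1].
  - by move=> *; apply: span_add.
  - by move=> *; apply: span_scale.
  - by move=> *; apply: span_mul.
move: sF; apply: span_ind_prop.
- by move=> x [j [Q [hQ ->]]]; have [] := Ipow j Q (IBq Q hQ).
- exact: toep_add.
- exact: toep_scale.
Qed.
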